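(* Let $A_1,\dots,A_n$ be commutative rings with unity and $B=A_1\oplus\cdots\oplus A_n$ their direct product. Let $(a_1,\dots,a_n)\in B$ be a non-zero, non-unit element. If $(a_1,\dots,a_n)$ is F-irreducible in $B$, then there exists $i\in\{1,\dots,n\}$ such that $a_i$ is F-irreducible in $A_i$ and $a_j$ is a unit of $A_j$ for every $j\neq i$.
   Context: For a commutative ring with unity $R$ and $r\in R$: a factorization of $r$ is an expression $r=a_1\cdots a_m$ with $a_k\in R$; a refinement of this factorization is a factorization obtained by replacing one or more of the factors by a factorization of that factor. A non-unit element $r\in R$ is called F-irreducible if every factorization of $r$ has a refinement in which $r$ appears as one of the new factors. *)

(* Defs.v *)
From Stdlib Require List.
From HB Require Import structures.
From mathcomp Require Import all_boot all_order all_algebra.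
Set Implicit Arguments. Unset Strict Implicit. Unset Printing Implicit Defensive.
Import GRing.Theory.
Local Open Scope ring_scope.

(* Notions of the paper stated for a commutative multiplicative monoid
   (T, mul, one); they only involve multiplication and the unity. *)
Section MonoidNotions.
Variables (T : Type) (mul : T -> T -> T) (one : T).

Definition mprod (s : seq T) : T := foldr mul one s.

Definition m_unit (x : T) : Prop := exists y, mul x y = one.

(* r is F-irreducible: r is a non-unit and every factorization
   r = a_1 ... a_m has a refinement (some factor a_k replaced by a
   factorization a_k = b_1 ... b_l) in which r is one of the new factors. *)
Definition m_F_irreducible (r : T) : Prop :=
  ~ m_unit r /\
  forall s : seq T, mprod s = r ->
    exists a (t : seq T), List.In a s /\ mprod t = a /\ List.In r t.
End MonoidNotions.

Definition is_unit (R : comPzRingType) (x : R) : Prop := m_unit *%R 1 x.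
Definition F_irreducible (R : comPzRingType) (x : R) : Prop :=
  m_F_irreducible *%R 1 x.

Definition dprod_ring (n : nat) (A : 'I_n -> comPzRingType) : Type :=
  forall i : 'I_n, A i.
Definition dprod_mul (n : nat) (A : 'I_n -> comPzRingType)
  (x y : dprod_ring A) : dprod_ring A := fun i => x i * y i.
Definition dprod_one (n : nat) (A : 'I_n -> comPzRingType) : dprod_ring A :=
  fun i => 1.
Definition dprod_zero (n : nat) (A : 'I_n -> comPzRingType) : dprod_ring A :=
  fun i => 0.

(* Main.v *)
Require Import Defs.
From mathcomp Require Import all_boot all_order all_algebra.
From Stdlib Require Import Classical ClassicalEpsilon FunctionalExtensionality.
Local Open Scope ring_scope.
Import GRing.Theory.

Definition upd (n : nat) (A : 'I_n -> comPzRingType) (f : dprod_ring A)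
  (i : 'I_n) (x : A i) : dprod_ring A :=
  fun j => if i =P j is ReflectT e then eq_rect i A x j e else f j.

Arguments upd {n A}.

Lemma upd_same (n : nat) (A : 'I_n -> comPzRingType) f i x : @upd n A f i x i = x.
Proof. rewrite /upd; case: eqP => // e; by rewrite (eq_irrelevance e erefl). Qed.

Lemma upd_other (n : nat) (A : 'I_n -> comPzRingType) f i x j : i != j -> @upd n A f i x j = f j.
Proof. rewrite /upd; case: eqP => // e; by rewrite e eqxx. Qed.

Lemma mprod_in (T : Type) (mul : T -> T -> T) (one : T)
  (mA : forall x y z, mul x (mul y z) = mul (mul x y) z)
  (mC : forall x y, mul x y = mul y x) r t :
  List.In r t -> exists c, mprod mul one t = mul r c.
Proof.
elim: t => [//|b t IH] /= [->|/IH [c Hc]]; first by exists (mprod mul one t).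
exists (mul b c); by rewrite Hc mA (mC b r) -mA.
Qed.

Arguments mprod_in {T mul one}.

Lemma mprod_coord (n : nat) (A : 'I_n -> comPzRingType) (s : seq (dprod_ring A)) i :
  mprod (@dprod_mul n A) (dprod_one A) s i = mprod *%R 1 (map (fun f => f i) s).
Proof. by elim: s => //= b s <-. Qed.

Lemma mprod_e (n : nat) (A : 'I_n -> comPzRingType) (i : 'I_n) (f : forall j : 'I_n, A j) (s : seq (A i)) :
  (forall j, j != i -> f j = 1) ->
  mprod (@dprod_mul n A) (dprod_one A) (map (@upd n A f i) s) =
  upd f i (mprod *%R 1 s).
Proof.
move=> Hf; elim: s => [|x s IH] /=.
  apply: functional_extensionality_dep => j.
  case: (eqVneq i j) => [<-|ne]; first by rewrite upd_same.
  by rewrite upd_other // Hf // eq_sym.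
rewrite IH; apply: functional_extensionality_dep => j.
case: (eqVneq i j) => [<-|ne]; first by rewrite /dprod_mul !upd_same.
by rewrite /dprod_mul !upd_other // Hf ?mul1r // eq_sym.
Qed.

Theorem mainTheorem6 (n : nat) (A : 'I_n -> comPzRingType) (a : dprod_ring A) :
  a <> dprod_zero A ->
  ~ m_unit (@dprod_mul n A) (dprod_one A) a ->
  m_F_irreducible (@dprod_mul n A) (dprod_one A) a ->
  exists i : 'I_n, F_irreducible (a i) /\
    (forall j : 'I_n, j != i -> is_unit (a j)).
Proof.
move=> _ Hnu [_ Hirr].
have mA : forall x y z : dprod_ring A,
    dprod_mul x (dprod_mul y z) = dprod_mul (dprod_mul x y) z.
  by move=> x y z; apply: functional_extensionality_dep => j; rewrite /dprod_mul mulrA.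
have mC : forall x y : dprod_ring A, dprod_mul x y = dprod_mul y x.
  by move=> x y; apply: functional_extensionality_dep => j; rewrite /dprod_mul mulrC.
have [i Hi] : exists i, ~ is_unit (a i).
  apply: NNPP => H; apply: Hnu.
  have H' : forall i, exists y, a i * y = 1.
    by move=> i; apply: NNPP => Hn; apply: H; exists i => -[y Hy]; apply: Hn; exists y.
  exists (fun i => proj1_sig (constructive_indefinite_description _ (H' i))).
  apply: functional_extensionality_dep => j; rewrite /dprod_mul.
  exact: proj2_sig (constructive_indefinite_description _ (H' j)).
exists i; split.
  split=> // s Hs.
  pose u := upd a i 1.
  have Hf : forall j, j != i -> dprod_one A j = 1 by [].
  have := Hirr (u :: map (upd (dprod_one A) i) s).
  case.
    rewrite /= mprod_e // Hs; apply: functional_extensionality_dep => j.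
    rewrite /dprod_mul /u; case: (eqVneq i j) => [<-|ne].
      by rewrite !upd_same mul1r.
    by rewrite !upd_other // mulr1.
  move=> f [t [Hin [Ht Hat]]].
  have [c Hc] := @mprod_in _ (@dprod_mul n A) (dprod_one A) mA mC a t Hat; rewrite Ht in Hc.
  case: Hin => [Hfu|].
    exfalso; apply: Hi; exists (c i).
    by have := congr1 (fun g => g i) Hc; rewrite -Hfu /u upd_same /dprod_mul => ->.
  case/List.in_map_iff => x [Hx Hxs].
  exists x, [:: a i; c i]; split; first exact: Hxs.
  split; last by left.
  have := congr1 (fun g => g i) Hc; rewrite -Hx upd_same /dprod_mul /= => ->.
  by rewrite mulr1.
move=> j ne; apply: NNPP => Hj.
have := Hirr [:: upd a j 1; upd (dprod_one A) j (a j)].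
case.
  rewrite /= /dprod_mul; apply: functional_extensionality_dep => k.
  case: (eqVneq j k) => [<-|nk]; first by rewrite !upd_same mul1r mulr1.
  by rewrite !upd_other // !mulr1.
move=> f [t [Hin [Ht Hat]]].
have [c Hc] := @mprod_in _ (@dprod_mul n A) (dprod_one A) mA mC a t Hat; rewrite Ht in Hc.
case: Hin => [Hf|[Hf|//]].
  apply: Hj; exists (c j).
  by have := congr1 (fun g => g j) Hc; rewrite -Hf upd_same /dprod_mul => ->.
apply: Hi; exists (c i).
have := congr1 (fun g => g i) Hc; rewrite -Hf upd_other //.
Qed.
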